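(* Let $t(x_1,\dots,x_n)$ be a term in the language of strong quasi-MV* algebras containing at least one occurrence of $\oplus$. Then for all $\langle a_1,b_1\rangle,\dots,\langle a_n,b_n\rangle\in S^*$, $$t^{\mathbf{S^*}}(\langle a_1,b_1\rangle,\dots,\langle a_n,b_n\rangle)=t^{\mathbf{S^*}}(\langle a_1,0\rangle,\dots,\langle a_n,0\rangle)=\langle z,0\rangle$$ for some $z\in[-1,1]$.
   Context: Terms in the language of strong quasi-MV* algebras are built from variables and constants $0,1$ using a binary operation $\oplus$ and unary operations $-,{}^+,{}^-$. $\mathbf{S^*}$ is the algebra with universe $S^*=[-1,1]\times[-1,1]\subseteq\mathbb{R}^2$ and operations $\langle a,b\rangle\oplus\langle c,d\rangle=\langle\max\{-1,\min\{1,a+c\}\},0\rangle$, $-\langle a,b\rangle=\langle -a,-b\rangle$, $\langle a,b\rangle^+=\langle\max\{0,a\},0\rangle$, $\langle a,b\rangle^-=\langle\min\{0,a\},0\rangle$, $0=\langle 0,0\rangle$, $1=\langle 1,0\rangle$; $t^{\mathbf{S^*}}$ denotes the term function of $t$ on $\mathbf{S^*}$. *)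

(* Defs.v *)
From Stdlib Require Import Reals Lra Lia.
Open Scope R_scope.

(* Terms of the language of strong quasi-MV* algebras:
   variables x_i (i : nat), constants 0,1, binary (+), unary -, ^+, ^-. *)
Inductive term : Type :=
  | Var : nat -> term
  | TZero : term
  | TOne : term
  | TOplus : term -> term -> term
  | TNeg : term -> term
  | TPos : term -> term
  | TNegP : term -> term.

Fixpoint has_oplus (t : term) : Prop :=
  match t with
  | Var _ | TZero | TOne => False
  | TOplus _ _ => True
  | TNeg u | TPos u | TNegP u => has_oplus u
  end.

Fixpoint vars_below (n : nat) (t : term) : Prop :=
  match t with
  | Var i => (i < n)%nat
  | TZero | TOne => True
  | TOplus u v => vars_below n u /\ vars_below n v
  | TNeg u | TPos u | TNegP u => vars_below n u
  end.

Definition inS (p : R * R) : Prop :=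
  -1 <= fst p <= 1 /\ -1 <= snd p <= 1.

Definition S_oplus (p q : R * R) : R * R :=
  (Rmax (-1) (Rmin 1 (fst p + fst q)), 0).
Definition S_neg (p : R * R) : R * R := (- fst p, - snd p).
Definition S_pos (p : R * R) : R * R := (Rmax 0 (fst p), 0).
Definition S_negp (p : R * R) : R * R := (Rmin 0 (fst p), 0).
Definition S_zero : R * R := (0, 0).
Definition S_one : R * R := (1, 0).

Fixpoint evalS (env : nat -> R * R) (t : term) : R * R :=
  match t with
  | Var i => env i
  | TZero => S_zero
  | TOne => S_one
  | TOplus u v => S_oplus (evalS env u) (evalS env v)
  | TNeg u => S_neg (evalS env u)
  | TPos u => S_pos (evalS env u)
  | TNegP u => S_negp (evalS env u)
  end.

(* Main.v *)
Require Import Defs.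
From Stdlib Require Import Reals Lra.
Open Scope R_scope.

Lemma fst_ind (env1 env2 : nat -> R * R) (t : term) :
  (forall i, fst (env1 i) = fst (env2 i)) ->
  fst (evalS env1 t) = fst (evalS env2 t).
Proof.
  intros H; induction t; simpl; unfold S_oplus, S_neg, S_pos, S_negp; simpl;
    try rewrite IHt; try rewrite IHt1, IHt2; auto.
Qed.

Lemma oplus_shape (env : nat -> R * R) (t : term) :
  has_oplus t -> snd (evalS env t) = 0 /\ -1 <= fst (evalS env t) <= 1.
Proof.
  induction t; simpl; intros H; try contradiction.
  - unfold S_oplus; simpl; split; [reflexivity|].
    unfold Rmax, Rmin; repeat destruct Rle_dec; lra.
  - destruct (IHt H) as [H1 H2]; unfold S_neg; simpl; rewrite H1; split; lra.
  - destruct (IHt H) as [H1 H2]; unfold S_pos; simpl; split; [reflexivity|].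
    unfold Rmax; destruct Rle_dec; lra.
  - destruct (IHt H) as [H1 H2]; unfold S_negp; simpl; split; [reflexivity|].
    unfold Rmin; destruct Rle_dec; lra.
Qed.

Theorem lemma3p4 (n : nat) (t : term) (a b : nat -> R) :
  vars_below n t ->
  has_oplus t ->
  (forall i : nat, (i < n)%nat -> inS (a i, b i)) ->
  evalS (fun i => (a i, b i)) t = evalS (fun i => (a i, 0)) t /\
  exists z : R, -1 <= z <= 1 /\ evalS (fun i => (a i, 0)) t = (z, 0).
Proof.
  intros _ Ho _.
  destruct (oplus_shape (fun i => (a i, b i)) t Ho) as [S1 _].
  destruct (oplus_shape (fun i => (a i, 0)) t Ho) as [S2 B2].
  assert (F : fst (evalS (fun i => (a i, b i)) t) = fst (evalS (fun i => (a i, 0)) t))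
    by (apply fst_ind; reflexivity).
  split.
  - rewrite (surjective_pairing (evalS (fun i => (a i, b i)) t)),
            (surjective_pairing (evalS (fun i => (a i, 0)) t)), F, S1, S2.
    reflexivity.
  - exists (fst (evalS (fun i => (a i, 0)) t)); split; [exact B2|].
    rewrite (surjective_pairing (evalS (fun i => (a i, 0)) t)) at 1; rewrite S2; reflexivity.
Qed.
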